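(* Let $K\subseteq\mathbb{R}$ be compact. Then $C^1(K)=C^1(\mathbb{R}|K)$ if and only if $\sigma(\xi)<\infty$ for all $\xi\in K$.
   Context: $C^1(K)$ is the set of $f:K\to\mathbb{R}$ admitting a continuous $f':K\to\mathbb{R}$ with $\lim_{y\to x,\,y\in K\setminus\{x\}}\frac{f(y)-f(x)-f'(x)(y-x)}{|y-x|}=0$ for all $x\in K$; $C^1(\mathbb{R}|K)=\{g|_K: g\in C^1(\mathbb{R})\}$. A gap of $K$ is a bounded connected component of $\mathbb{R}\setminus K$ (a maximal bounded open interval in the complement); $\ell(G)$ denotes its length. For $\xi\in K$ and $\varepsilon>0$, $\sigma_\varepsilon(\xi)=\sup\left\{\frac{\sup\{|y-\xi|:y\in G\}}{\ell(G)}: G\subseteq(\xi-\varepsilon,\xi+\varepsilon) \text{ a gap of } K\right\}\in[0,\infty]$ with $\sup\emptyset=0$, and $\sigma(\xi)=\lim_{\varepsilon\to0}\sigma_\varepsilon(\xi)$. *)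

(* Defs.v *)
From Stdlib Require Import Reals Rtopology.
Open Scope R_scope.

Definition C1_on (K : R -> Prop) (f : R -> R) : Prop :=
  exists f' : R -> R,
    (forall x, K x -> forall eps, 0 < eps -> exists delta, 0 < delta /\
       forall y, K y -> Rabs (y - x) < delta -> Rabs (f' y - f' x) < eps) /\
    (forall x, K x -> forall eps, 0 < eps -> exists delta, 0 < delta /\
       forall y, K y -> y <> x -> Rabs (y - x) < delta ->
         Rabs ((f y - f x - f' x * (y - x)) / Rabs (y - x)) < eps).

Definition C1_R (g : R -> R) : Prop :=
  exists g' : R -> R, (forall x, derivable_pt_lim g x (g' x)) /\ continuity g'.

Definition C1_restr (K : R -> Prop) (f : R -> R) : Prop :=
  exists g : R -> R, C1_R g /\ forall x, K x -> g x = f x.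

(* The open interval (a,b) is a gap of K: a bounded connected component of
   R \ K, i.e. a maximal bounded open interval in the complement.  For an
   interval (a,b) with a < b contained in the complement, maximality is
   exactly that both endpoints lie in K. *)
Definition gap (K : R -> Prop) (a b : R) : Prop :=
  a < b /\ (forall x, a < x < b -> ~ K x) /\ K a /\ K b.

(* sup { |y - xi| : y in (a,b) } / l((a,b)) *)
Definition gap_ratio (xi a b : R) : R :=
  Rmax (Rabs (a - xi)) (Rabs (b - xi)) / (b - a).

Definition sigma_eps_le (K : R -> Prop) (xi eps M : R) : Prop :=
  forall a b, gap K a b -> xi - eps <= a -> b <= xi + eps -> gap_ratio xi a b <= M.

(* sigma(xi) = lim_{eps->0} sigma_eps(xi) < infinity.  Since sigma_eps(xi) is
   nondecreasing in eps, the limit is an infimum, so it is finite iff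
   sigma_eps(xi) is finite for some eps > 0. *)
Definition sigma_finite (K : R -> Prop) (xi : R) : Prop :=
  exists eps M, 0 < eps /\ sigma_eps_le K xi eps M.

(* Main.v *)
Require Import Defs.
From Stdlib Require Import Reals Rtopology ClassicalEpsilon Classical Lra Lia Arith.
From Coquelicot Require Coquelicot.
Open Scope R_scope.

Module Aux.
Import Coquelicot.Coquelicot.
Lemma herm_derive (fa da c2 c3 a y : R) :
  derivable_pt_lim (fun z => fa + da*(z-a) + c2*(z-a)^2 + c3*(z-a)^3) y
    (da + 2*c2*(y-a) + 3*c3*(y-a)^2).
Proof. apply is_derive_Reals. auto_derive; auto. ring. Qed.
Lemma lin_derive (fa da a y : R) :
  derivable_pt_lim (fun z => fa + da*(z-a)) y da.
Proof. apply is_derive_Reals. auto_derive; auto. ring. Qed.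
Lemma const_derive (c y : R) : derivable_pt_lim (fun _ => c) y 0.
Proof. apply is_derive_Reals. auto_derive; auto. Qed.
Lemma quad_derive (p q r a y : R) :
  derivable_pt_lim (fun z => p + q*(z-a) + r*(z-a)^2) y (q + 2*r*(y-a)).
Proof. apply is_derive_Reals. auto_derive; auto. ring. Qed.
End Aux.

Lemma cont_pt_eps (f : R -> R) x :
  continuity_pt f x <-> (forall eps, 0 < eps -> exists d, 0 < d /\
     forall y, Rabs (y - x) < d -> Rabs (f y - f x) < eps).
Proof.
  split.
  - intros H eps He. destruct (H eps He) as [d [Hd Hy]]. exists d; split; auto.
    intros y Hyx. destruct (Req_dec y x) as [->|Hne].
    + rewrite Rminus_diag, Rabs_R0; auto.
    + apply (Hy y). split. split; [exact I| auto]. exact Hyx.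
  - intros H eps He. destruct (H eps He) as [d [Hd Hy]]. exists d; split; auto.
    intros y [_ Hyx]. apply Hy. exact Hyx.
Qed.

Lemma cont_local (g Q : R -> R) y r :
  0 < r -> (forall z, Rabs (z - y) < r -> g z = Q z) -> continuity_pt Q y ->
  continuity_pt g y.
Proof.
  intros Hr Heq HQ. rewrite cont_pt_eps in HQ |- *.
  intros eps He. destruct (HQ eps He) as [d [Hd Hz]].
  exists (Rmin d r). split. apply Rmin_pos; auto.
  intros z Hz'. rewrite (Heq z), (Heq y).
  - apply Hz. eapply Rlt_le_trans; [exact Hz'| apply Rmin_l].
  - rewrite Rminus_diag, Rabs_R0; auto.
  - eapply Rlt_le_trans; [exact Hz'| apply Rmin_r].
Qed.

Lemma deriv_local (g P : R -> R) y r l :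
  0 < r -> (forall z, Rabs (z - y) < r -> g z = P z) -> derivable_pt_lim P y l ->
  derivable_pt_lim g y l.
Proof.
  intros Hr Heq HP eps He. destruct (HP eps He) as [d Hd].
  assert (Hp : 0 < Rmin d r) by (apply Rmin_pos; [apply cond_pos| auto]).
  exists (mkposreal _ Hp). intros h Hh Hh'. simpl in Hh'.
  rewrite (Heq (y+h)), (Heq y).
  - apply Hd; auto. eapply Rlt_le_trans; [exact Hh'| apply Rmin_l].
  - rewrite Rminus_diag, Rabs_R0; auto.
  - replace (y + h - y) with h by ring. eapply Rlt_le_trans; [exact Hh'| apply Rmin_r].
Qed.

Lemma least_ex (P : nat -> Prop) : (exists n, P n) -> exists n, P n /\ forall m, P m -> (n <= m)%nat.
Proof.
  intros [n Hn]. apply NNPP. intro Hno.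
  assert (forall k, forall m, (m <= k)%nat -> ~ P m).
  { induction k.
    - intros m Hm HPm. apply Hno. exists m. split; auto. intros m' _. lia.
    - intros m Hm HPm. destruct (Nat.eq_dec m (S k)) as [->|].
      + apply Hno. exists (S k). split; auto. intros m' Hm'.
        destruct (Nat.le_gt_cases (S k) m'); auto. exfalso. apply (IHk m'); auto. lia.
      + apply (IHk m); auto. lia. }
  apply (H n n); auto.
Qed.

Lemma compact_closed_loc (K : R -> Prop) : compact K ->
  forall s, ~ K s -> exists d, 0 < d /\ forall z, Rabs (z - s) < d -> ~ K z.
Proof.
  intros HK s Hs. pose proof (compact_P2 K HK) as Hc.
  destruct (Hc s Hs) as [d Hd]. exists d. split. apply cond_pos.
  intros z Hz. apply (Hd z). exact Hz.
Qed.

Lemma max_exists (S : R -> Prop) :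
  (forall s, ~ S s -> exists d, 0 < d /\ forall z, Rabs (z - s) < d -> ~ S z) ->
  (exists k, S k) -> (exists m, forall k, S k -> k <= m) ->
  exists a, S a /\ forall k, S k -> k <= a.
Proof.
  intros Hc Hne [m Hm].
  destruct (completeness S) as [s [Hub Hl]].
  - exists m. intros k Hk. auto.
  - exact Hne.
  - exists s. split; [| exact Hub].
    apply NNPP. intro Hs. destruct (Hc s Hs) as [d [Hd Hz]].
    assert (Hb : is_upper_bound S (s - d/2)).
    { intros k Hk. destruct (Rle_lt_dec k (s - d/2)); auto.
      exfalso. apply (Hz k); auto. pose proof (Hub k Hk).
      apply Rabs_def1; lra. }
    pose proof (Hl _ Hb). lra.
Qed.
Definition Hu fa fb da a b := (fb - fa)/(b-a) - da.
Definition HW fa fb da db a b := 18 * Rabs (Hu fa fb da a b) + 8 * Rabs (db - da).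
Definition Hm fa fb da db a b z :=
  let u := Hu fa fb da a b in let v := db - da in
  fa + da*(z-a) + ((3*u - v)/(b-a))*(z-a)^2 + ((v - 2*u)/((b-a)*(b-a)))*(z-a)^3.
Definition Hd fa fb da db a b z :=
  let u := Hu fa fb da a b in let v := db - da in
  da + 2*((3*u - v)/(b-a))*(z-a) + 3*((v - 2*u)/((b-a)*(b-a)))*(z-a)^2.

Lemma abs_lin p q c k : 0 <= c <= k -> Rabs (p + q*c) <= Rabs p + k * Rabs q.
Proof.
  intros Hc. eapply Rle_trans. apply Rabs_triang. rewrite Rabs_mult.
  rewrite (Rabs_pos_eq c) by lra. pose proof (Rabs_pos q). nra.
Qed.

Lemma abs_prod3 x y z : 0 <= x -> 0 <= y -> Rabs (x*y*z) = x*y*Rabs z.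
Proof. intros. rewrite !Rabs_mult, (Rabs_pos_eq x), (Rabs_pos_eq y); lra. Qed.

Lemma herm_bounds fa fb da db a b z : a < b -> a <= z <= b ->
  let W := HW fa fb da db a b in
  Rabs (Hm fa fb da db a b z - fa - da*(z-a)) <= (z-a)*((z-a)/(b-a))*W /\
  Rabs (Hd fa fb da db a b z - da) <= ((z-a)/(b-a))*W /\
  Rabs (Hm fa fb da db a b z - fb - db*(z-b)) <= (b-z)*((b-z)/(b-a))*W /\
  Rabs (Hd fa fb da db a b z - db) <= ((b-z)/(b-a))*W.
Proof.
  intros Hab Hz W.
  set (u := Hu fa fb da a b). set (v := db - da).
  set (al := 3*u - v). set (be := v - 2*u).
  set (s := (z-a)/(b-a)). set (w := (b-z)/(b-a)).
  assert (Hs : 0 <= s <= 1).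
  { unfold s. split. apply Rle_mult_inv_pos; lra.
    apply (Rmult_le_reg_r (b-a)); [lra|]. unfold Rdiv. rewrite Rmult_assoc, Rinv_l; lra. }
  assert (Hw : w = 1 - s) by (unfold w, s; field; lra).
  assert (Hal : Rabs al <= 3*Rabs u + Rabs v).
  { unfold al. eapply Rle_trans. apply Rabs_triang. rewrite Rabs_Ropp, Rabs_mult.
    rewrite (Rabs_pos_eq 3); lra. }
  assert (Hbe : Rabs be <= Rabs v + 2*Rabs u).
  { unfold be. eapply Rle_trans. apply Rabs_triang. rewrite Rabs_Ropp, Rabs_mult.
    rewrite (Rabs_pos_eq 2); lra. }
  assert (HW : W = 18*Rabs u + 8*Rabs v) by reflexivity.
  pose proof (Rabs_pos u). pose proof (Rabs_pos v).
  assert (Hfb : fb = fa + (b-a)*(u+da)) by (unfold u, Hu; field; lra).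
  repeat split.
  - assert (E : Hm fa fb da db a b z - fa - da*(z-a) = (z-a)*s*(al + be*s)).
    { unfold Hm, s, al, be. fold u. fold v. field. lra. }
    rewrite E, abs_prod3 by (unfold s in *; lra).
    apply Rmult_le_compat_l. apply Rmult_le_pos; lra.
    eapply Rle_trans. apply (abs_lin al be s 1); lra. lra.
  - assert (E : Hd fa fb da db a b z - da = s*(2*al + (3*be)*s)).
    { unfold Hd, s, al, be. fold u. fold v. field. lra. }
    rewrite E, Rabs_mult, (Rabs_pos_eq s) by lra.
    apply Rmult_le_compat_l. lra.
    eapply Rle_trans. apply (abs_lin (2*al) (3*be) s 1); lra.
    rewrite !Rabs_mult, (Rabs_pos_eq 2), (Rabs_pos_eq 3) by lra. lra.
  - assert (E : Hm fa fb da db a b z - fb - db*(z-b) = (b-z)*w*(al + be*(2+s))).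
    { unfold Hm, w, s, al, be, u, v, Hu. field. lra. }
    rewrite E, abs_prod3 by (unfold w in *; try lra; apply Rle_mult_inv_pos; lra).
    apply Rmult_le_compat_l. apply Rmult_le_pos; [lra|]. unfold w; apply Rle_mult_inv_pos; lra.
    replace (al + be*(2+s)) with ((al + 2*be) + be*s) by ring.
    eapply Rle_trans. apply (abs_lin _ be s 1); lra.
    eapply Rle_trans. apply Rplus_le_compat_r. apply Rabs_triang.
    rewrite Rabs_mult, (Rabs_pos_eq 2) by lra. lra.
  - assert (E : Hd fa fb da db a b z - db = - (w*((2*al + 3*be) + (3*be)*s))).
    { unfold Hd, w, s, al, be, u, v, Hu. field. lra. }
    rewrite E, Rabs_Ropp, Rabs_mult, (Rabs_pos_eq w) by (rewrite Hw; lra).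
    apply Rmult_le_compat_l. rewrite Hw; lra.
    eapply Rle_trans. apply (abs_lin _ (3*be) s 1); lra.
    eapply Rle_trans. apply Rplus_le_compat_r. apply Rabs_triang.
    rewrite !Rabs_mult, (Rabs_pos_eq 2), (Rabs_pos_eq 3) by lra. lra.
Qed.
Definition hasL (K : R -> Prop) y := exists k, K k /\ k <= y.
Definition hasR (K : R -> Prop) y := exists k, K k /\ y <= k.
Definition isA (K : R -> Prop) y a := K a /\ a <= y /\ forall k, K k -> k <= y -> k <= a.
Definition isB (K : R -> Prop) y b := K b /\ y <= b /\ forall k, K k -> y <= k -> b <= k.
Definition Aof K y := epsilon (inhabits 0) (isA K y).
Definition Bof K y := epsilon (inhabits 0) (isB K y).

Definition closedloc (K : R -> Prop) :=
  forall s, ~ K s -> exists d, 0 < d /\ forall z, Rabs (z - s) < d -> ~ K z.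

Lemma Aof_eq K y a : isA K y a -> Aof K y = a.
Proof.
  intros Ha. assert (H : isA K y (Aof K y)) by (unfold Aof, Bof; apply epsilon_spec; eauto).
  destruct Ha as [Ka [Hay Hma]], H as [Ka' [Hay' Hma']].
  apply Rle_antisym; auto.
Qed.

Lemma Bof_eq K y b : isB K y b -> Bof K y = b.
Proof.
  intros Hb. assert (H : isB K y (Bof K y)) by (unfold Aof, Bof; apply epsilon_spec; eauto).
  destruct Hb as [Kb [Hby Hmb]], H as [Kb' [Hby' Hmb']].
  apply Rle_antisym; auto.
Qed.

Lemma isA_ex K y : closedloc K -> hasL K y -> exists a, isA K y a.
Proof.
  intros Kc Hl.
  destruct (max_exists (fun k => K k /\ k <= y)) as [a [[Ka Hay] Hm]].
  - intros s Hs. destruct (classic (K s)) as [Ks|Ks].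
    + assert (s > y) by (destruct (Rle_lt_dec s y); [exfalso; tauto| lra]).
      exists (s - y). split. lra. intros z Hz [_ Hzy].
      apply Rabs_def2 in Hz. lra.
    + destruct (Kc s Ks) as [d [Hd Hz]]. exists d. split; auto.
      intros z Hz' [Kz _]. apply (Hz z); auto.
  - exact Hl.
  - exists y. intros k [_ Hk]; auto.
  - exists a. repeat split; auto.
Qed.

Lemma isB_ex K y : closedloc K -> hasR K y -> exists b, isB K y b.
Proof.
  intros Kc [k0 [Kk0 Hk0]].
  destruct (max_exists (fun z => K (-z) /\ z <= -y)) as [a [[Ka Hay] Hm]].
  - intros s Hs. destruct (classic (K (-s))) as [Ks|Ks].
    + assert (s > -y) by (destruct (Rle_lt_dec s (-y)); [exfalso; tauto| lra]).
      exists (s + y). split. lra. intros z Hz [_ Hzy].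
      apply Rabs_def2 in Hz. lra.
    + destruct (Kc (-s) Ks) as [d [Hd Hz]]. exists d. split; auto.
      intros z Hz' [Kz _]. apply (Hz (-z)); auto.
      replace (-z - - s) with (-(z - s)) by ring. rewrite Rabs_Ropp; auto.
  - exists (-k0). split. rewrite Ropp_involutive; auto. lra.
  - exists (-y). intros k [_ Hk]; auto.
  - exists (-a). repeat split; auto. lra.
    intros k Kk Hk. assert (-k <= a). apply Hm. split. rewrite Ropp_involutive; auto. lra. lra.
Qed.

Section Ext.
Variables (K : R -> Prop) (f fd : R -> R).

Definition gext y :=
  if excluded_middle_informative (K y) then f y else
  if excluded_middle_informative (hasL K y) then
    (if excluded_middle_informative (hasR K y) then
      Hm (f (Aof K y)) (f (Bof K y)) (fd (Aof K y)) (fd (Bof K y)) (Aof K y) (Bof K y) y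
     else f (Aof K y) + fd (Aof K y) * (y - Aof K y))
  else if excluded_middle_informative (hasR K y) then f (Bof K y) + fd (Bof K y) * (y - Bof K y)
  else 0.

Definition gdext y :=
  if excluded_middle_informative (K y) then fd y else
  if excluded_middle_informative (hasL K y) then
    (if excluded_middle_informative (hasR K y) then
      Hd (f (Aof K y)) (f (Bof K y)) (fd (Aof K y)) (fd (Bof K y)) (Aof K y) (Bof K y) y
     else fd (Aof K y))
  else if excluded_middle_informative (hasR K y) then fd (Bof K y)
  else 0.

Lemma g_K y : K y -> gext y = f y /\ gdext y = fd y.
Proof. intros Ky. unfold gext, gdext. destruct (excluded_middle_informative (K y)); tauto. Qed.

Lemma g_gap y a b : ~ K y -> isA K y a -> isB K y b ->
  gext y = Hm (f a) (f b) (fd a) (fd b) a b y /\ gdext y = Hd (f a) (f b) (fd a) (fd b) a b y.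
Proof.
  intros Ky Ha Hb. unfold gext, gdext.
  rewrite (Aof_eq _ _ _ Ha), (Bof_eq _ _ _ Hb).
  destruct (excluded_middle_informative (K y)) as [Kyy|_]; [tauto|].
  destruct (excluded_middle_informative (hasL K y)) as [|n].
  2:{ exfalso; apply n. destruct Ha as [? [? _]]; eexists; eauto. }
  destruct (excluded_middle_informative (hasR K y)) as [|n]; auto.
  exfalso; apply n. destruct Hb as [? [? _]]; eexists; eauto.
Qed.

Lemma g_rout y a : ~ K y -> isA K y a -> ~ hasR K y ->
  gext y = f a + fd a * (y - a) /\ gdext y = fd a.
Proof.
  intros Ky Ha Hb. unfold gext, gdext.
  rewrite (Aof_eq _ _ _ Ha).
  destruct (excluded_middle_informative (K y)) as [Kyy|_]; [tauto|].
  destruct (excluded_middle_informative (hasL K y)) as [|n].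
  2:{ exfalso; apply n. destruct Ha as [? [? _]]; eexists; eauto. }
  destruct (excluded_middle_informative (hasR K y)) as [|n]; tauto.
Qed.

Lemma g_lout y b : ~ K y -> ~ hasL K y -> isB K y b ->
  gext y = f b + fd b * (y - b) /\ gdext y = fd b.
Proof.
  intros Ky Ha Hb. unfold gext, gdext.
  rewrite (Bof_eq _ _ _ Hb).
  destruct (excluded_middle_informative (K y)) as [Kyy|_]; [tauto|].
  destruct (excluded_middle_informative (hasL K y)) as [|n]; [tauto|].
  destruct (excluded_middle_informative (hasR K y)) as [|n2]; auto.
  exfalso; apply n2. destruct Hb as [? [? _]]; eexists; eauto.
Qed.

Lemma g_none y : ~ K y -> ~ hasL K y -> ~ hasR K y -> gext y = 0 /\ gdext y = 0.
Proof.
  intros Ky Ha Hb. unfold gext, gdext.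
  destruct (excluded_middle_informative (K y)) as [Kyy|_]; [tauto|].
  destruct (excluded_middle_informative (hasL K y)) as [|n]; [tauto|].
  destruct (excluded_middle_informative (hasR K y)) as [|n2]; tauto.
Qed.

End Ext.

Lemma Hm_derive fa fb da db a b y :
  derivable_pt_lim (Hm fa fb da db a b) y (Hd fa fb da db a b y).
Proof. unfold Hm, Hd. cbv zeta. apply Aux.herm_derive. Qed.

Lemma Hd_cont fa fb da db a b y : continuity_pt (Hd fa fb da db a b) y.
Proof.
  unfold Hd. cbv zeta. apply derivable_continuous_pt. eexists. apply Aux.quad_derive.
Qed.

Lemma const_cont (c y : R) : continuity_pt (fun _ => c) y.
Proof. apply derivable_continuous_pt. eexists. apply Aux.const_derive. Qed.

Section Ext2.
Variables (K : R -> Prop) (f fd : R -> R).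
Hypothesis Kc : closedloc K.

Lemma notK_local y : ~ K y -> exists r, 0 < r /\ exists P Q : R -> R,
  (forall z, Rabs (z - y) < r -> gext K f fd z = P z /\ gdext K f fd z = Q z) /\
  derivable_pt_lim P y (Q y) /\ continuity_pt Q y.
Proof.
  intros Ky.
  destruct (classic (hasL K y)) as [HL|HL]; destruct (classic (hasR K y)) as [HR|HR].
  - destruct (isA_ex K y Kc HL) as [a Ha]. destruct (isB_ex K y Kc HR) as [b Hb].
    pose proof Ha as [Ka [Hay Hma]]. pose proof Hb as [Kb [Hby Hmb]].
    assert (a <> y) by (intro; subst; tauto). assert (b <> y) by (intro; subst; tauto).
    exists (Rmin (y - a) (b - y)). split. apply Rmin_pos; lra.
    exists (Hm (f a) (f b) (fd a) (fd b) a b), (Hd (f a) (f b) (fd a) (fd b) a b).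
    split; [| split; [apply Hm_derive | apply Hd_cont]].
    intros z Hz. pose proof (Rmin_l (y-a) (b-y)). pose proof (Rmin_r (y-a) (b-y)).
    apply Rabs_def2 in Hz.
    assert (Kz : ~ K z).
    { intro Kz. destruct (Rle_lt_dec z y). pose proof (Hma z Kz r). lra.
      pose proof (Hmb z Kz ltac:(lra)). lra. }
    apply g_gap; auto.
    + repeat split; auto; try lra. intros k Kk Hk.
      destruct (Rle_lt_dec k y). auto. pose proof (Hmb k Kk ltac:(lra)). lra.
    + repeat split; auto; try lra. intros k Kk Hk.
      destruct (Rle_lt_dec y k). auto. pose proof (Hma k Kk ltac:(lra)). lra.
  - destruct (isA_ex K y Kc HL) as [a Ha]. pose proof Ha as [Ka [Hay Hma]].
    assert (a <> y) by (intro; subst; tauto).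
    exists (y - a). split. lra.
    exists (fun z => f a + fd a * (z - a)), (fun _ => fd a).
    split; [| split; [apply Aux.lin_derive | apply const_cont]].
    intros z Hz. apply Rabs_def2 in Hz.
    assert (NR : forall k, K k -> k <= y).
    { intros k Kk. destruct (Rle_lt_dec k y); auto. exfalso; apply HR. exists k; split; auto; lra. }
    apply g_rout.
    + intro Kz. pose proof (Hma z Kz (NR z Kz)). lra.
    + repeat split; auto; try lra. try (intros k Kk _; apply Hma; auto).
    + intros [k [Kk Hk]]. pose proof (NR k Kk). pose proof (Hma k Kk (NR k Kk)). lra.
  - destruct (isB_ex K y Kc HR) as [b Hb]. pose proof Hb as [Kb [Hby Hmb]].
    assert (b <> y) by (intro; subst; tauto).
    exists (b - y). split. lra.
    exists (fun z => f b + fd b * (z - b)), (fun _ => fd b).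
    split; [| split; [apply Aux.lin_derive | apply const_cont]].
    intros z Hz. apply Rabs_def2 in Hz.
    assert (NL : forall k, K k -> y <= k).
    { intros k Kk. destruct (Rle_lt_dec y k); auto. exfalso; apply HL. exists k; split; auto; lra. }
    apply g_lout.
    + intro Kz. pose proof (Hmb z Kz (NL z Kz)). lra.
    + intros [k [Kk Hk]]. pose proof (NL k Kk). pose proof (Hmb k Kk (NL k Kk)). lra.
    + repeat split; auto; try lra. try (intros k Kk _; apply Hmb; auto).
  - assert (NK : forall k, ~ K k).
    { intros k Kk. destruct (Rle_lt_dec k y). apply HL; exists k; split; auto.
      apply HR; exists k; split; auto; lra. }
    exists 1. split. lra. exists (fun _ => 0), (fun _ => 0).
    split; [| split; [apply Aux.const_derive | apply const_cont]].
    intros z _. apply g_none; auto.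
    + intros [k [Kk _]]; apply (NK k Kk).
    + intros [k [Kk _]]; apply (NK k Kk).
Qed.

End Ext2.

Lemma abs_div_le N L c : 0 < L -> Rabs N <= c * L -> Rabs (N / L) <= c.
Proof.
  intros HL H. unfold Rdiv. rewrite Rabs_mult, Rabs_inv, (Rabs_pos_eq L) by lra.
  apply (Rmult_le_reg_r L); auto. rewrite Rmult_assoc, Rinv_l; lra.
Qed.

Lemma abs_sub p q : Rabs (p - q) <= Rabs p + Rabs q.
Proof. unfold Rminus. eapply Rle_trans. apply Rabs_triang. rewrite Rabs_Ropp. lra. Qed.

Lemma frac01 a b y : a < b -> a <= y <= b ->
  0 <= (y-a)/(b-a) <= 1 /\ 0 <= (b-y)/(b-a) <= 1.
Proof.
  intros Hab Hy. assert (0 < b - a) by lra.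
  split; split; try (apply Rle_mult_inv_pos; lra);
  apply (Rmult_le_reg_r (b-a)); auto; unfold Rdiv; rewrite Rmult_assoc, Rinv_l; lra.
Qed.

Lemma diff_bound (K : R -> Prop) (f fd : R -> R) x :
  (forall eps, 0 < eps -> exists delta, 0 < delta /\
       forall y, K y -> y <> x -> Rabs (y - x) < delta ->
         Rabs ((f y - f x - fd x * (y - x)) / Rabs (y - x)) < eps) ->
  forall eps, 0 < eps -> exists delta, 0 < delta /\
       forall y, K y -> Rabs (y - x) < delta ->
         Rabs (f y - f x - fd x * (y - x)) <= eps * Rabs (y - x).
Proof.
  intros H eps He. destruct (H eps He) as [d [Hd Hy]]. exists d; split; auto.
  intros y Ky Hyx. destruct (Req_dec y x) as [->|Hne].
  - replace (f x - f x - fd x * (x - x)) with 0 by ring. rewrite Rabs_R0. pose proof (Rabs_pos (x-x)). nra.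
  - pose proof (Hy y Ky Hne Hyx) as Hl.
    assert (0 < Rabs (y - x)) by (apply Rabs_pos_lt; lra).
    unfold Rdiv in Hl. rewrite Rabs_mult, Rabs_inv, Rabs_Rabsolu in Hl.
    apply Rlt_le. apply (Rmult_lt_reg_r (/ Rabs (y - x))). apply Rinv_0_lt_compat; auto.
    rewrite Rmult_assoc, Rinv_r by lra. lra.
Qed.

Section Ext3.
Variables (K : R -> Prop) (f fd : R -> R).
Hypothesis Kc : closedloc K.
Hypothesis Hcont : forall x, K x -> forall eps, 0 < eps -> exists delta, 0 < delta /\
       forall y, K y -> Rabs (y - x) < delta -> Rabs (fd y - fd x) < eps.
Hypothesis Hdiff : forall x, K x -> forall eps, 0 < eps -> exists delta, 0 < delta /\
       forall y, K y -> Rabs (y - x) < delta ->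
         Rabs (f y - f x - fd x * (y - x)) <= eps * Rabs (y - x).
Hypothesis Hsig : forall xi, K xi -> sigma_finite K xi.

Lemma sig_M0 x : K x -> exists e0 M0, 0 < e0 /\ 1 <= M0 /\
  forall a b, gap K a b -> x - e0 <= a -> b <= x + e0 ->
     Rmax (Rabs (a - x)) (Rabs (b - x)) <= M0 * (b - a).
Proof.
  intros Kx. destruct (Hsig x Kx) as [e0 [M [He0 HM]]].
  exists e0, (Rabs M + 1). split; auto. split. pose proof (Rabs_pos M); lra.
  intros a b Hg Ha Hb. pose proof (HM a b Hg Ha Hb) as H. unfold gap_ratio in H.
  destruct Hg as [Hab _].
  assert (Rmax (Rabs (a - x)) (Rabs (b - x)) <= M * (b - a)).
  { apply (Rmult_le_compat_r (b - a)) in H; [|lra].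
    unfold Rdiv in H. rewrite Rmult_assoc, Rinv_l in H by lra. lra. }
  pose proof (Rle_abs M). nra.
Qed.

Lemma RS x : K x -> forall eps, 0 < eps -> exists d, 0 < d /\ forall y, x < y < x + d -> ~ K y ->
  Rabs (gext K f fd y - f x - fd x * (y - x)) <= eps * (y - x) /\
  Rabs (gdext K f fd y - fd x) <= eps.
Proof.
  intros Kx eps He.
  destruct (sig_M0 x Kx) as [e0 [M0 [He0 [HM1 HM]]]].
  set (e1 := eps / (72*M0+72)).
  assert (He1 : 0 < e1) by (unfold e1; apply Rdiv_lt_0_compat; lra).
  assert (He1e : e1 * (72*M0+72) = eps) by (unfold e1; field; lra).
  destruct (Hcont x Kx e1 He1) as [d1 [Hd1 Hc1]].
  destruct (Hdiff x Kx e1 He1) as [d2 [Hd2 Hc2]].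
  set (rho := Rmin d1 (Rmin d2 e0)).
  assert (Hr1 : rho <= d1) by apply Rmin_l.
  assert (Hr2 : rho <= d2) by (eapply Rle_trans; [apply Rmin_r| apply Rmin_l]).
  assert (Hr3 : rho <= e0) by (eapply Rle_trans; [apply Rmin_r| apply Rmin_r]).
  assert (Hrho : 0 < rho) by (unfold rho; repeat apply Rmin_pos; auto).
  destruct (classic (exists k, K k /\ x < k < x + rho)) as [[k [Kk Hk]] | Hno].
  - exists (k - x). split. lra. intros y Hy Ky.
    destruct (isA_ex K y Kc) as [a Ha]; [exists x; split; auto; lra|].
    destruct (isB_ex K y Kc) as [b Hb]; [exists k; split; auto; lra|].
    destruct (g_gap K f fd y a b Ky Ha Hb) as [E1 E2]. rewrite E1, E2.
    destruct Ha as [Ka [Hay Hma]], Hb as [Kb [Hby Hmb]].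
    assert (Hxa : x <= a) by (apply Hma; auto; lra).
    assert (a <> y) by (intro Heq; rewrite Heq in Ka; tauto).
    assert (b <> y) by (intro Heq; rewrite Heq in Kb; tauto).
    assert (Hbk : b <= k) by (apply Hmb; auto; lra).
    assert (Hg : gap K a b).
    { split. lra. split; auto. intros z Hz Kz. destruct (Rle_lt_dec z y).
      pose proof (Hma z Kz r); lra. pose proof (Hmb z Kz ltac:(lra)); lra. }
    pose proof (HM a b Hg ltac:(lra) ltac:(lra)) as HMab.
    assert (HbM : b - x <= M0 * (b - a)).
    { eapply Rle_trans; [| exact HMab]. eapply Rle_trans; [| apply Rmax_r].
      rewrite Rabs_pos_eq; lra. }
    assert (Fa : Rabs (fd a - fd x) < e1) by (apply Hc1; auto; rewrite Rabs_pos_eq; lra).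
    assert (Fb : Rabs (fd b - fd x) < e1) by (apply Hc1; auto; rewrite Rabs_pos_eq; lra).
    assert (Da : Rabs (f a - f x - fd x * (a - x)) <= e1 * (a - x)).
    { rewrite <- (Rabs_pos_eq (a - x)) at 2 by lra. apply Hc2; auto. rewrite Rabs_pos_eq; lra. }
    assert (Db : Rabs (f b - f x - fd x * (b - x)) <= e1 * (b - x)).
    { rewrite <- (Rabs_pos_eq (b - x)) at 2 by lra. apply Hc2; auto. rewrite Rabs_pos_eq; lra. }
    assert (Hu_b : Rabs (Hu (f a) (f b) (fd a) a b) <= 2 * (M0 * e1) + e1).
    { replace (Hu (f a) (f b) (fd a) a b) with
        ((f b - f x - fd x * (b - x) - (f a - f x - fd x * (a - x))) / (b - a) + (fd x - fd a))
        by (unfold Hu; field; lra).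
      eapply Rle_trans. apply Rabs_triang.
      assert (Rabs ((f b - f x - fd x * (b - x) - (f a - f x - fd x * (a - x))) / (b - a)) <= 2 * (M0 * e1)).
      { apply abs_div_le. lra. eapply Rle_trans. apply abs_sub. nra. }
      rewrite Rabs_minus_sym in Fa. lra. }
    assert (Hv_b : Rabs (fd b - fd a) <= 2 * e1).
    { replace (fd b - fd a) with ((fd b - fd x) - (fd a - fd x)) by ring.
      eapply Rle_trans. apply abs_sub. lra. }
    assert (HWb : HW (f a) (f b) (fd a) (fd b) a b <= 36 * (M0 * e1) + 34 * e1) by (unfold HW; lra).
    assert (HW0 : 0 <= HW (f a) (f b) (fd a) (fd b) a b).
    { unfold HW. pose proof (Rabs_pos (Hu (f a) (f b) (fd a) a b)). pose proof (Rabs_pos (fd b - fd a)). lra. }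
    destruct (herm_bounds (f a) (f b) (fd a) (fd b) a b y ltac:(lra) ltac:(lra)) as [B1 [B2 _]].
    destruct (frac01 a b y ltac:(lra) ltac:(lra)) as [[S0 S1] _].
    set (W := HW (f a) (f b) (fd a) (fd b) a b) in *.
    set (s := (y - a) / (b - a)) in *.
    assert (SW : s * W <= W) by nra.
    split.
    + replace (Hm (f a) (f b) (fd a) (fd b) a b y - f x - fd x * (y - x)) with
        ((Hm (f a) (f b) (fd a) (fd b) a b y - f a - fd a * (y - a)) + (f a - f x - fd x * (a - x))
          + (fd a - fd x) * (y - a)) by ring.
      eapply Rle_trans. apply Rabs_triang. eapply Rle_trans. apply Rplus_le_compat_r. apply Rabs_triang.
      rewrite Rabs_mult, (Rabs_pos_eq (y - a)) by lra.
      assert (Rabs (fd a - fd x) * (y - a) <= e1 * (y - a)) by (apply Rmult_le_compat_r; lra).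
      assert ((y - a) * s * W <= (y - a) * W) by (rewrite Rmult_assoc; apply Rmult_le_compat_l; lra).
      assert ((y - a) * W <= (y - a) * (36 * (M0 * e1) + 34 * e1)) by (apply Rmult_le_compat_l; lra).
      assert (eps * (y - x) = (y - a) * (72 * (M0 * e1) + 72 * e1) + (a - x) * (72 * (M0 * e1) + 72 * e1)) by (rewrite <- He1e; ring).
      assert (0 <= (y - a) * (M0 * e1)) by (apply Rmult_le_pos; [lra| apply Rmult_le_pos; lra]).
      assert (0 <= (a - x) * (M0 * e1)) by (apply Rmult_le_pos; [lra| apply Rmult_le_pos; lra]).
      assert (0 <= (a - x) * e1) by (apply Rmult_le_pos; lra).
      assert (0 <= (y - a) * e1) by (apply Rmult_le_pos; lra).
      nra.
    + replace (Hd (f a) (f b) (fd a) (fd b) a b y - fd x) with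
        ((Hd (f a) (f b) (fd a) (fd b) a b y - fd a) + (fd a - fd x)) by ring.
      eapply Rle_trans. apply Rabs_triang.
      assert (0 <= M0 * e1) by (apply Rmult_le_pos; lra).
      rewrite <- He1e. lra.
  - assert (Hno' : forall k, K k -> x < k -> x + rho <= k).
    { intros k Kk Hk. destruct (Rle_lt_dec (x + rho) k); auto. exfalso; apply Hno; exists k; auto. }
    destruct (classic (exists k, K k /\ x < k)) as [[k1 [Kk1 Hk1]] | Hno2].
    + destruct (isB_ex K (x + rho/2) Kc) as [b0 Hb0].
      { exists k1. split; auto. pose proof (Hno' k1 Kk1 Hk1). lra. }
      pose proof Hb0 as [Kb0 [Hb0x Hmb0]].
      assert (Hb0r : x + rho <= b0) by (apply Hno'; auto; lra).
      set (W0 := HW (f x) (f b0) (fd x) (fd b0) x b0).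
      assert (HW0 : 0 <= W0).
      { unfold W0, HW. pose proof (Rabs_pos (Hu (f x) (f b0) (fd x) x b0)). pose proof (Rabs_pos (fd b0 - fd x)). lra. }
      set (q := eps / (W0 + 1)).
      assert (Hq : 0 < q) by (unfold q; apply Rdiv_lt_0_compat; lra).
      assert (Hqe : q * (W0 + 1) = eps) by (unfold q; field; lra).
      exists (Rmin rho ((b0 - x) * q)). split. apply Rmin_pos; auto. apply Rmult_lt_0_compat; lra.
      intros y Hy Ky. pose proof (Rmin_l rho ((b0 - x) * q)). pose proof (Rmin_r rho ((b0 - x) * q)).
      assert (HA : isA K y x).
      { repeat split; auto; try lra. intros k Kk Hk. destruct (Rle_lt_dec k x); auto.
        pose proof (Hno' k Kk r). lra. }
      assert (HB : isB K y b0).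
      { repeat split; auto; try lra. intros k Kk Hk. apply Hmb0; auto.
        destruct (Rle_lt_dec k x). exfalso. destruct HA as [_ [_ HA]]. lra.
        pose proof (Hno' k Kk r). lra. }
      destruct (g_gap K f fd y x b0 Ky HA HB) as [E1 E2]. rewrite E1, E2.
      destruct (herm_bounds (f x) (f b0) (fd x) (fd b0) x b0 y ltac:(lra) ltac:(lra)) as [B1 [B2 _]].
      fold W0 in B1, B2.
      set (s := (y - x) / (b0 - x)) in *.
      assert (Hs : s * (b0 - x) = y - x) by (unfold s; field; lra).
      assert (Hs0 : 0 <= s) by (unfold s; apply Rle_mult_inv_pos; lra).
      assert (Hsq : s < q) by nra.
      assert (HsW : s * W0 <= eps) by nra.
      split.
      * eapply Rle_trans. exact B1. rewrite Rmult_assoc. rewrite (Rmult_comm eps).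
        apply Rmult_le_compat_l; lra.
      * lra.
    + exists 1. split. lra. intros y Hy Ky.
      assert (HA : isA K y x).
      { repeat split; auto; try lra. intros k Kk Hk. destruct (Rle_lt_dec k x); auto.
        exfalso; apply Hno2; exists k; auto. }
      destruct (g_rout K f fd y x Ky HA) as [E1 E2].
      { intros [k [Kk Hk]]. apply Hno2. exists k. split; auto; lra. }
      rewrite E1, E2. replace (f x + fd x * (y - x) - f x - fd x * (y - x)) with 0 by ring.
      rewrite Rminus_diag, Rabs_R0. split; nra.
Qed.

Lemma LS x : K x -> forall eps, 0 < eps -> exists d, 0 < d /\ forall y, x - d < y < x -> ~ K y ->
  Rabs (gext K f fd y - f x - fd x * (y - x)) <= eps * (x - y) /\
  Rabs (gdext K f fd y - fd x) <= eps.
Proof.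
  intros Kx eps He.
  destruct (sig_M0 x Kx) as [e0 [M0 [He0 [HM1 HM]]]].
  set (e1 := eps / (72*M0+72)).
  assert (He1 : 0 < e1) by (unfold e1; apply Rdiv_lt_0_compat; lra).
  assert (He1e : e1 * (72*M0+72) = eps) by (unfold e1; field; lra).
  destruct (Hcont x Kx e1 He1) as [d1 [Hd1 Hc1]].
  destruct (Hdiff x Kx e1 He1) as [d2 [Hd2 Hc2]].
  set (rho := Rmin d1 (Rmin d2 e0)).
  assert (Hr1 : rho <= d1) by apply Rmin_l.
  assert (Hr2 : rho <= d2) by (eapply Rle_trans; [apply Rmin_r| apply Rmin_l]).
  assert (Hr3 : rho <= e0) by (eapply Rle_trans; [apply Rmin_r| apply Rmin_r]).
  assert (Hrho : 0 < rho) by (unfold rho; repeat apply Rmin_pos; auto).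
  destruct (classic (exists k, K k /\ x - rho < k < x)) as [[k [Kk Hk]] | Hno].
  - exists (x - k). split. lra. intros y Hy Ky.
    destruct (isA_ex K y Kc) as [a Ha]; [exists k; split; auto; lra|].
    destruct (isB_ex K y Kc) as [b Hb]; [exists x; split; auto; lra|].
    destruct (g_gap K f fd y a b Ky Ha Hb) as [E1 E2]. rewrite E1, E2.
    destruct Ha as [Ka [Hay Hma]], Hb as [Kb [Hby Hmb]].
    assert (Hxb : b <= x) by (apply Hmb; auto; lra).
    assert (a <> y) by (intro Heq; rewrite Heq in Ka; tauto).
    assert (b <> y) by (intro Heq; rewrite Heq in Kb; tauto).
    assert (Hak : k <= a) by (apply Hma; auto; lra).
    assert (Hg : gap K a b).
    { split. lra. split; auto. intros z Hz Kz. destruct (Rle_lt_dec z y).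
      pose proof (Hma z Kz r); lra. pose proof (Hmb z Kz ltac:(lra)); lra. }
    pose proof (HM a b Hg ltac:(lra) ltac:(lra)) as HMab.
    assert (HaM : x - a <= M0 * (b - a)).
    { eapply Rle_trans; [| exact HMab]. eapply Rle_trans; [| apply Rmax_l].
      rewrite Rabs_left1; lra. }
    assert (Fa : Rabs (fd a - fd x) < e1) by (apply Hc1; auto; rewrite Rabs_left1; lra).
    assert (Fb : Rabs (fd b - fd x) < e1) by (apply Hc1; auto; rewrite Rabs_left1; lra).
    assert (Da : Rabs (f a - f x - fd x * (a - x)) <= e1 * (x - a)).
    { replace (x - a) with (Rabs (a - x)) by (rewrite Rabs_left1; lra). apply Hc2; auto. rewrite Rabs_left1; lra. }
    assert (Db : Rabs (f b - f x - fd x * (b - x)) <= e1 * (x - b)).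
    { replace (x - b) with (Rabs (b - x)) by (rewrite Rabs_left1; lra). apply Hc2; auto. rewrite Rabs_left1; lra. }
    assert (Hu_b : Rabs (Hu (f a) (f b) (fd a) a b) <= 2 * (M0 * e1) + e1).
    { replace (Hu (f a) (f b) (fd a) a b) with
        ((f b - f x - fd x * (b - x) - (f a - f x - fd x * (a - x))) / (b - a) + (fd x - fd a))
        by (unfold Hu; field; lra).
      eapply Rle_trans. apply Rabs_triang.
      assert (Rabs ((f b - f x - fd x * (b - x) - (f a - f x - fd x * (a - x))) / (b - a)) <= 2 * (M0 * e1)).
      { apply abs_div_le. lra. eapply Rle_trans. apply abs_sub. nra. }
      rewrite Rabs_minus_sym in Fa. lra. }
    assert (Hv_b : Rabs (fd b - fd a) <= 2 * e1).
    { replace (fd b - fd a) with ((fd b - fd x) - (fd a - fd x)) by ring.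
      eapply Rle_trans. apply abs_sub. lra. }
    assert (HWb : HW (f a) (f b) (fd a) (fd b) a b <= 36 * (M0 * e1) + 34 * e1) by (unfold HW; lra).
    assert (HW0 : 0 <= HW (f a) (f b) (fd a) (fd b) a b).
    { unfold HW. pose proof (Rabs_pos (Hu (f a) (f b) (fd a) a b)). pose proof (Rabs_pos (fd b - fd a)). lra. }
    destruct (herm_bounds (f a) (f b) (fd a) (fd b) a b y ltac:(lra) ltac:(lra)) as [_ [_ [B1 B2]]].
    destruct (frac01 a b y ltac:(lra) ltac:(lra)) as [_ [S0 S1]].
    set (W := HW (f a) (f b) (fd a) (fd b) a b) in *.
    set (s := (b - y) / (b - a)) in *.
    assert (SW : s * W <= W) by nra.
    split.
    + replace (Hm (f a) (f b) (fd a) (fd b) a b y - f x - fd x * (y - x)) with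
        ((Hm (f a) (f b) (fd a) (fd b) a b y - f b - fd b * (y - b)) + (f b - f x - fd x * (b - x))
          + (fd b - fd x) * (y - b)) by ring.
      eapply Rle_trans. apply Rabs_triang. eapply Rle_trans. apply Rplus_le_compat_r. apply Rabs_triang.
      rewrite Rabs_mult, (Rabs_left1 (y - b)) by lra. replace (- (y - b)) with (b - y) by ring.
      assert (Rabs (fd b - fd x) * (b - y) <= e1 * (b - y)) by (apply Rmult_le_compat_r; lra).
      assert ((b - y) * s * W <= (b - y) * W) by (rewrite Rmult_assoc; apply Rmult_le_compat_l; lra).
      assert ((b - y) * W <= (b - y) * (36 * (M0 * e1) + 34 * e1)) by (apply Rmult_le_compat_l; lra).
      assert (eps * (x - y) = (b - y) * (72 * (M0 * e1) + 72 * e1) + (x - b) * (72 * (M0 * e1) + 72 * e1)) by (rewrite <- He1e; ring).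
      assert (0 <= (b - y) * (M0 * e1)) by (apply Rmult_le_pos; [lra| apply Rmult_le_pos; lra]).
      assert (0 <= (x - b) * (M0 * e1)) by (apply Rmult_le_pos; [lra| apply Rmult_le_pos; lra]).
      assert (0 <= (x - b) * e1) by (apply Rmult_le_pos; lra).
      assert (0 <= (b - y) * e1) by (apply Rmult_le_pos; lra).
      nra.
    + replace (Hd (f a) (f b) (fd a) (fd b) a b y - fd x) with
        ((Hd (f a) (f b) (fd a) (fd b) a b y - fd b) + (fd b - fd x)) by ring.
      eapply Rle_trans. apply Rabs_triang.
      assert (0 <= M0 * e1) by (apply Rmult_le_pos; lra).
      rewrite <- He1e. lra.
  - assert (Hno' : forall k, K k -> k < x -> k <= x - rho).
    { intros k Kk Hk. destruct (Rle_lt_dec k (x - rho)); auto. exfalso; apply Hno; exists k; split; auto; lra. }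
    destruct (classic (exists k, K k /\ k < x)) as [[k1 [Kk1 Hk1]] | Hno2].
    + destruct (isA_ex K (x - rho/2) Kc) as [a0 Ha0].
      { exists k1. split; auto. pose proof (Hno' k1 Kk1 Hk1). lra. }
      pose proof Ha0 as [Ka0 [Ha0x Hma0]].
      assert (Ha0r : a0 <= x - rho) by (apply Hno'; auto; lra).
      set (W0 := HW (f a0) (f x) (fd a0) (fd x) a0 x).
      assert (HW0 : 0 <= W0).
      { unfold W0, HW. pose proof (Rabs_pos (Hu (f a0) (f x) (fd a0) a0 x)). pose proof (Rabs_pos (fd x - fd a0)). lra. }
      set (q := eps / (W0 + 1)).
      assert (Hq : 0 < q) by (unfold q; apply Rdiv_lt_0_compat; lra).
      assert (Hqe : q * (W0 + 1) = eps) by (unfold q; field; lra).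
      exists (Rmin rho ((x - a0) * q)). split. apply Rmin_pos; auto. apply Rmult_lt_0_compat; lra.
      intros y Hy Ky. pose proof (Rmin_l rho ((x - a0) * q)). pose proof (Rmin_r rho ((x - a0) * q)).
      assert (HB : isB K y x).
      { repeat split; auto; try lra. intros k Kk Hk. destruct (Rle_lt_dec x k); auto.
        pose proof (Hno' k Kk r). lra. }
      assert (HA : isA K y a0).
      { repeat split; auto; try lra. intros k Kk Hk. apply Hma0; auto.
        destruct (Rle_lt_dec x k). exfalso. destruct HB as [_ [_ HB]]. lra.
        pose proof (Hno' k Kk r). lra. }
      destruct (g_gap K f fd y a0 x Ky HA HB) as [E1 E2]. rewrite E1, E2.
      destruct (herm_bounds (f a0) (f x) (fd a0) (fd x) a0 x y ltac:(lra) ltac:(lra)) as [_ [_ [B1 B2]]].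
      fold W0 in B1, B2.
      set (s := (x - y) / (x - a0)) in *.
      assert (Hs : s * (x - a0) = x - y) by (unfold s; field; lra).
      assert (Hs0 : 0 <= s) by (unfold s; apply Rle_mult_inv_pos; lra).
      assert (Hsq : s < q) by nra.
      assert (HsW : s * W0 <= eps) by nra.
      split.
      * eapply Rle_trans. exact B1. rewrite Rmult_assoc. rewrite (Rmult_comm eps).
        apply Rmult_le_compat_l; lra.
      * lra.
    + exists 1. split. lra. intros y Hy Ky.
      assert (HB : isB K y x).
      { repeat split; auto; try lra. intros k Kk Hk. destruct (Rle_lt_dec x k); auto.
        exfalso; apply Hno2; exists k; auto. }
      destruct (g_lout K f fd y x Ky) as [E1 E2]; auto.
      { intros [k [Kk Hk]]. apply Hno2. exists k. split; auto; lra. }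
      rewrite E1, E2. replace (f x + fd x * (y - x) - f x - fd x * (y - x)) with 0 by ring.
      rewrite Rminus_diag, Rabs_R0. split; nra.
Qed.
End Ext3.

Lemma abs_div_le' N h c : h <> 0 -> Rabs N <= c * Rabs h -> Rabs (N / h) <= c.
Proof.
  intros Hh H. unfold Rdiv. rewrite Rabs_mult, Rabs_inv.
  assert (0 < Rabs h) by (apply Rabs_pos_lt; auto).
  apply (Rmult_le_reg_r (Rabs h)); auto. rewrite Rmult_assoc, Rinv_l; lra.
Qed.

Lemma extend_ok (K : R -> Prop) (Kc : closedloc K) (Hsig : forall xi, K xi -> sigma_finite K xi)
  (f : R -> R) : C1_on K f -> C1_restr K f.
Proof.
  intros [fd [Hc Hd0]].
  assert (Hd : forall x, K x -> forall eps, 0 < eps -> exists delta, 0 < delta /\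
       forall y, K y -> Rabs (y - x) < delta ->
         Rabs (f y - f x - fd x * (y - x)) <= eps * Rabs (y - x)).
  { intros x Kx. apply diff_bound. apply Hd0; auto. }
  exists (gext K f fd). split.
  2:{ intros x Kx. apply (g_K K f fd x Kx). }
  exists (gdext K f fd). split.
  - intros x. destruct (classic (K x)) as [Kx|Kx].
    + destruct (g_K K f fd x Kx) as [E1 E2]. rewrite E2.
      intros eps He.
      destruct (Hd x Kx (eps/2) ltac:(lra)) as [d2 [Hd2 H2]].
      destruct (RS K f fd Kc Hc Hd Hsig x Kx (eps/2) ltac:(lra)) as [dR [HdR HR]].
      destruct (LS K f fd Kc Hc Hd Hsig x Kx (eps/2) ltac:(lra)) as [dL [HdL HL]].
      assert (Hp : 0 < Rmin d2 (Rmin dR dL)) by (repeat apply Rmin_pos; auto).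
      exists (mkposreal _ Hp). simpl. intros h Hh0 Hh.
      pose proof (Rmin_l d2 (Rmin dR dL)). pose proof (Rmin_r d2 (Rmin dR dL)).
      pose proof (Rmin_l dR dL). pose proof (Rmin_r dR dL).
      rewrite E1.
      replace ((gext K f fd (x + h) - f x) / h - fd x) with
        ((gext K f fd (x + h) - f x - fd x * ((x + h) - x)) / h) by (field; auto).
      assert (Rabs (gext K f fd (x + h) - f x - fd x * ((x + h) - x)) <= eps / 2 * Rabs h).
      { destruct (classic (K (x + h))) as [Ky|Ky].
        - destruct (g_K K f fd _ Ky) as [E3 _]. rewrite E3.
          replace h with (x + h - x) at 3 by ring. apply H2; auto.
          replace (x + h - x) with h by ring. lra.
        - apply Rabs_def2 in Hh. destruct (Rlt_or_le 0 h).
          + destruct (HR (x + h) ltac:(lra) Ky) as [B _].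
            rewrite (Rabs_pos_eq h) by lra. replace (eps / 2 * h) with (eps / 2 * (x + h - x)) by ring. exact B.
          + assert (h < 0) by lra.
            destruct (HL (x + h) ltac:(lra) Ky) as [B _].
            rewrite (Rabs_left h) by lra. replace (- h) with (x - (x + h)) by ring. exact B. }
      eapply Rle_lt_trans. apply abs_div_le'; eauto. lra.
    + destruct (notK_local K f fd Kc x Kx) as [r [Hr [P [Q [HPQ [HD HC]]]]]].
      assert (E : gdext K f fd x = Q x) by (apply HPQ; rewrite Rminus_diag, Rabs_R0; auto).
      rewrite E. apply (deriv_local _ P x r); auto. intros z Hz. apply HPQ; auto.
  - intros x. destruct (classic (K x)) as [Kx|Kx].
    + apply cont_pt_eps. intros eps He.
      destruct (g_K K f fd x Kx) as [_ E2]. rewrite E2.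
      destruct (Hc x Kx eps He) as [d1 [Hd1 H1]].
      destruct (RS K f fd Kc Hc Hd Hsig x Kx (eps/2) ltac:(lra)) as [dR [HdR HR]].
      destruct (LS K f fd Kc Hc Hd Hsig x Kx (eps/2) ltac:(lra)) as [dL [HdL HL]].
      exists (Rmin d1 (Rmin dR dL)). split. repeat apply Rmin_pos; auto.
      intros y Hy.
      pose proof (Rmin_l d1 (Rmin dR dL)). pose proof (Rmin_r d1 (Rmin dR dL)).
      pose proof (Rmin_l dR dL). pose proof (Rmin_r dR dL).
      destruct (classic (K y)) as [Ky|Ky].
      * destruct (g_K K f fd y Ky) as [_ E3]. rewrite E3. apply H1; auto. lra.
      * apply Rabs_def2 in Hy. destruct (Rtotal_order y x) as [Hlt|[Heq|Hgt]].
        -- destruct (HL y ltac:(lra) Ky) as [_ B]. lra.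
        -- subst; tauto.
        -- destruct (HR y ltac:(lra) Ky) as [_ B]. lra.
    + destruct (notK_local K f fd Kc x Kx) as [r [Hr [P [Q [HPQ [HD HC]]]]]].
      apply (cont_local _ Q x r); auto. intros z Hz. apply HPQ; auto.
Qed.

Lemma restr_to_on (K : R -> Prop) (f : R -> R) : C1_restr K f -> C1_on K f.
Proof.
  intros [g [[g' [Hder Hcont]] Heq]]. exists g'. split.
  - intros x Kx eps He. pose proof (Hcont x) as Hx. rewrite cont_pt_eps in Hx.
    destruct (Hx eps He) as [d [Hd Hy]]. exists d; split; auto.
  - intros x Kx eps He. destruct (Hder x eps He) as [d Hd].
    exists d. split. apply cond_pos. intros y Ky Hne Hyx.
    rewrite <- (Heq y Ky), <- (Heq x Kx).
    assert (Hh : y - x <> 0) by lra.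
    pose proof (Hd (y - x) Hh Hyx) as H. replace (x + (y - x)) with y in H by ring.
    replace ((g y - g x - g' x * (y - x)) / Rabs (y - x)) with
      (((g y - g x) / (y - x) - g' x) * ((y - x) / Rabs (y - x))) by (field; split; auto; apply Rabs_no_R0; auto).
    rewrite Rabs_mult. unfold Rdiv at 2. rewrite Rabs_mult, Rabs_inv, Rabs_Rabsolu, Rinv_r by (apply Rabs_no_R0; auto).
    lra.
Qed.

Lemma arch1 e : 0 < e -> exists n : nat, / INR (n + 1) < e.
Proof.
  intros He. destruct (archimed_cor1 e He) as [N [HN HN0]].
  exists (N - 1)%nat. replace (N - 1 + 1)%nat with N by lia. auto.
Qed.

Lemma INR_S1 n : 1 <= INR (n + 1).
Proof. replace 1 with (INR 1) by reflexivity. apply le_INR. lia. Qed.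

Section Bad.
Variables (K : R -> Prop) (xi : R).
Hypothesis Kxi : K xi.

Definition good eps M (p : R * R) := gap K (fst p) (snd p) /\ xi - eps <= fst p /\
  snd p <= xi + eps /\ M < gap_ratio xi (fst p) (snd p).

Hypothesis Hbad : forall eps M, 0 < eps -> exists p : R * R, good eps M p.

Definition Ch eps M := epsilon (inhabits (0, 0)) (good eps M).
Definition farp (p : R * R) := Rmax (Rabs (fst p - xi)) (Rabs (snd p - xi)).
Definition nearp (p : R * R) := Rmin (Rabs (fst p - xi)) (Rabs (snd p - xi)).
Definition nexteps (p : R * R) (m : nat) := Rmin (nearp p) (Rmin ((snd p - fst p) / 2) (/ INR (m + 2))).
Fixpoint gs (n : nat) : R * R :=
  match n with O => Ch 1 1 | S m => Ch (nexteps (gs m) m) (INR (m + 2)) end.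
Definition epsn n := match n with O => 1 | S m => nexteps (gs m) m end.
Definition an n := fst (gs n).
Definition bn n := snd (gs n).
Definition ln n := bn n - an n.
Definition far n := farp (gs n).
Definition near n := nearp (gs n).

Lemma side_gen p M : gap K (fst p) (snd p) -> 1 <= M -> M < gap_ratio xi (fst p) (snd p) ->
  (xi < fst p /\ nearp p = fst p - xi /\ farp p = snd p - xi) \/
  (snd p < xi /\ nearp p = xi - snd p /\ farp p = xi - fst p).
Proof.
  destruct p as [a b]; simpl. intros [Hab [Hno [Ka Kb]]] HM Hr. unfold nearp, farp; simpl.
  unfold gap_ratio in Hr.
  destruct (Rle_lt_dec xi a) as [H1|H1].
  - destruct (Req_dec xi a) as [E|E].
    + exfalso. rewrite <- E in Hr, Hab. rewrite Rminus_diag, Rabs_R0, (Rabs_pos_eq (b - xi)) in Hr by lra.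
      rewrite Rmax_right in Hr by lra. rewrite Rdiv_diag in Hr by lra. lra.
    + left. rewrite (Rabs_pos_eq (a - xi)), (Rabs_pos_eq (b - xi)) by lra.
      rewrite Rmin_left, Rmax_right by lra. repeat split; lra.
  - destruct (Rle_lt_dec b xi) as [H2|H2].
    + destruct (Req_dec xi b) as [E|E].
      * exfalso. rewrite <- E in Hr, Hab. rewrite Rminus_diag, Rabs_R0, (Rabs_left1 (a - xi)) in Hr by lra.
        rewrite Rmax_left in Hr by lra. replace (- (a - xi)) with (xi - a) in Hr by ring.
        rewrite Rdiv_diag in Hr by lra. lra.
      * right. rewrite (Rabs_left1 (a - xi)), (Rabs_left1 (b - xi)) by lra.
        rewrite Rmin_right, Rmax_left by lra. repeat split; lra.
    + exfalso. apply (Hno xi); auto.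
Qed.

Lemma gs_good n : 0 < epsn n /\ good (epsn n) (INR (n + 1)) (gs n).
Proof.
  induction n as [|m [IHe IHg]].
  - split. simpl; lra. change (good 1 1 (Ch 1 1)). unfold Ch. apply epsilon_spec. apply Hbad. lra.
  - assert (Hpos : 0 < nexteps (gs m) m).
    { pose proof IHg as [Hg [_ [_ Hr]]].
      pose proof (Hg) as [Hab _].
      destruct (side_gen (gs m) (INR (m + 1)) Hg (INR_S1 m) Hr) as [[H1 [H2 _]]|[H1 [H2 _]]];
      unfold nexteps; (apply Rmin_pos; [rewrite H2; lra| apply Rmin_pos; [lra| apply Rinv_0_lt_compat, lt_0_INR; lia]]). }
    split. exact Hpos.
    change (good (nexteps (gs m) m) (INR (S m + 1)) (Ch (nexteps (gs m) m) (INR (m + 2)))).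
    replace (S m + 1)%nat with (m + 2)%nat by lia.
    unfold Ch. apply epsilon_spec. apply Hbad. exact Hpos.
Qed.

Lemma Fgap n : gap K (an n) (bn n).
Proof. destruct (gs_good n) as [_ [H _]]. exact H. Qed.

Lemma Fab n : an n < bn n.
Proof. destruct (Fgap n) as [H _]. exact H. Qed.

Lemma Fside n : (xi < an n /\ near n = an n - xi /\ far n = bn n - xi) \/
  (bn n < xi /\ near n = xi - bn n /\ far n = xi - an n).
Proof.
  destruct (gs_good n) as [_ [Hg [_ [_ Hr]]]]. apply (side_gen _ (INR (n+1))); auto. apply INR_S1.
Qed.

Lemma Ffar n : far n <= epsn n.
Proof.
  destruct (gs_good n) as [_ [Hg [H1 [H2 _]]]]. fold (an n) (bn n) in H1, H2.
  pose proof (Fab n). destruct (Fside n) as [[? [? ->]]|[? [? ->]]]; lra.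
Qed.

Lemma Fratio n : INR (n + 1) * ln n < far n.
Proof.
  destruct (gs_good n) as [_ [_ [_ [_ Hr]]]]. unfold gap_ratio in Hr.
  pose proof (Fab n). unfold ln, far, farp. fold (an n) (bn n) in *.
  apply (Rmult_lt_compat_r (bn n - an n)) in Hr; [|lra].
  unfold Rdiv in Hr. rewrite Rmult_assoc, Rinv_l in Hr by lra. lra.
Qed.

Lemma Fl_far n : ln n < far n.
Proof.
  pose proof (Fratio n). pose proof (INR_S1 n). pose proof (Fab n). unfold ln in *. nra.
Qed.

Lemma Feps n : epsn (S n) <= near n /\ epsn (S n) <= ln n / 2 /\ epsn (S n) <= / INR (n + 2).
Proof.
  simpl. unfold nexteps, near, ln, an, bn. split. apply Rmin_l. split.
  eapply Rle_trans; [apply Rmin_r| apply Rmin_l].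
  eapply Rle_trans; [apply Rmin_r| apply Rmin_r].
Qed.

Lemma Fepsn n : epsn n <= / INR (n + 1).
Proof.
  destruct n. simpl. lra. destruct (Feps n) as [_ [_ H]].
  replace (S n + 1)%nat with (n + 2)%nat by lia. exact H.
Qed.

Lemma Fnear_far n : near n <= far n.
Proof. pose proof (Fab n). destruct (Fside n) as [[? [-> ->]]|[? [-> ->]]]; lra. Qed.

Lemma Fl_step n : ln (S n) <= ln n / 2.
Proof.
  pose proof (Fl_far (S n)). pose proof (Ffar (S n)). destruct (Feps n) as [_ [Hq _]]. lra.
Qed.

Lemma Fl_pos n : 0 < ln n.
Proof. pose proof (Fab n). unfold ln. lra. Qed.

Lemma Fl_mono m n : (m <= n)%nat -> ln n <= ln m.
Proof.
  induction 1. lra. pose proof (Fl_step m0). pose proof (Fl_pos m0). lra.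
Qed.

Lemma Feps_mono m n : (m <= n)%nat -> epsn n <= epsn m.
Proof.
  induction 1. lra. destruct (Feps m0) as [Hq1 _]. pose proof (Fnear_far m0). pose proof (Ffar m0). lra.
Qed.

Lemma Ffarnear m n : (m < n)%nat -> far n <= near m.
Proof.
  intros Hmn. pose proof (Ffar n). pose proof (Feps_mono (S m) n Hmn). destruct (Feps m) as [Hq1 _]. lra.
Qed.

Definition between n y := (xi <= an n /\ bn n <= y) \/ (y <= an n /\ bn n <= xi).
Definition Nof y := epsilon (inhabits 0%nat) (fun n => between n y /\ forall m, between m y -> (n <= m)%nat).
Definition fbad y := if excluded_middle_informative (exists n, between n y) then ln (Nof y) else 0.

Lemma Nof_spec y : (exists n, between n y) -> between (Nof y) y /\ forall m, between m y -> (Nof y <= m)%nat.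
Proof. intros H. unfold Nof. apply epsilon_spec. apply least_ex. exact H. Qed.

Lemma fbad_val y N : between N y -> (forall m, between m y -> (N <= m)%nat) -> fbad y = ln N.
Proof.
  intros HN Hm. unfold fbad. destruct (excluded_middle_informative _) as [He|He].
  - destruct (Nof_spec y He) as [H1 H2]. f_equal. apply Nat.le_antisymm; auto.
  - exfalso. apply He. eauto.
Qed.

Lemma fbad_none y : ~ (exists n, between n y) -> fbad y = 0.
Proof. intros H. unfold fbad. destruct (excluded_middle_informative _); tauto. Qed.

Lemma fbad_ext x y : (forall n, between n y <-> between n x) -> fbad y = fbad x.
Proof.
  intros H. destruct (classic (exists n, between n x)) as [He|He].
  - destruct (Nof_spec x He) as [H1 H2].
    rewrite (fbad_val x (Nof x)), (fbad_val y (Nof x)); auto.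
    apply H; auto. intros m Hm. apply H2. apply H; auto.
  - rewrite !fbad_none; auto. intros [n Hn]. apply He. exists n. apply H; auto.
Qed.

Lemma between_far n y : between n y -> far n <= Rabs (y - xi).
Proof.
  intros Hb. pose proof (Fab n). pose proof (Rle_abs (y - xi)).
  pose proof (Rle_abs (-(y - xi))). rewrite Rabs_Ropp in H1.
  destruct (Fside n) as [[? [? ->]]|[? [? ->]]]; destruct Hb as [[? ?]|[? ?]]; lra.
Qed.

Lemma fbad_nonneg y : 0 <= fbad y.
Proof.
  unfold fbad. destruct (excluded_middle_informative _). apply Rlt_le, Fl_pos. lra.
Qed.

Lemma fbad_upper y n : (forall m, between m y -> (n < m)%nat) -> fbad y <= ln n / 2.
Proof.
  intros H. unfold fbad. destruct (excluded_middle_informative _) as [He|He].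
  - destruct (Nof_spec y He) as [H1 _]. pose proof (H _ H1).
    pose proof (Fl_mono (S n) (Nof y) H0). pose proof (Fl_step n). lra.
  - pose proof (Fl_pos n). lra.
Qed.


Lemma fbad_xi : fbad xi = 0.
Proof. apply fbad_none. intros [n [[H1 H2]|[H1 H2]]]; pose proof (Fab n); lra. Qed.

Lemma transfer n0 D u v : K u -> K v -> Rabs (u - v) < ln n0 -> Rabs (u - v) < D ->
  D <= Rabs (v - xi) -> (forall n, ln n < ln n0 -> far n < D) ->
  forall n, between n u -> between n v.
Proof.
  intros Ku Kv H1 H2 H3 Hf n Hb. destruct (classic (between n v)) as [|Hnb]; auto. exfalso.
  pose proof (Fab n). destruct (Fgap n) as [_ [Hno _]].
  pose proof (Rle_abs (u - v)). pose proof (Rle_abs (-(u - v))). rewrite Rabs_Ropp in H4.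
  assert (Hv : v <= an n \/ bn n <= v).
  { destruct (Rle_lt_dec v (an n)); auto. destruct (Rle_lt_dec (bn n) v); auto.
    exfalso. apply (Hno v); auto. }
  unfold ln in *.
  destruct (Rle_lt_dec xi v) as [Hs|Hs];
    [rewrite (Rabs_pos_eq (v - xi)) in H3 by lra | rewrite (Rabs_left (v - xi)) in H3 by lra];
  destruct (Fside n) as [[? [? Hfe]]|[? [? Hfe]]]; unfold between in Hb, Hnb;
  destruct Hb as [[? ?]|[? ?]].
  all: try lra.
  all: try (assert (Hl : bn n - an n < bn n - an n0) by lra; pose proof (Hf n Hl); lra).
  all: try (assert (Hl : bn n - an n < bn n0 - an n0) by lra; pose proof (Hf n Hl); lra).
  all: try (destruct Hv; [| apply Hnb; left; split; lra];
            assert (Hl : ln n < ln n0) by (unfold ln; lra); pose proof (Hf n Hl); lra).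
  all: try (destruct Hv; [apply Hnb; right; split; lra| ];
            assert (Hl : ln n < ln n0) by (unfold ln; lra); pose proof (Hf n Hl); lra).
Qed.

Lemma ends n : (xi < an n /\ far n = bn n - xi /\ fbad (bn n) = ln n /\ fbad (an n) <= ln n / 2) \/
               (bn n < xi /\ far n = xi - an n /\ fbad (an n) = ln n /\ fbad (bn n) <= ln n / 2).
Proof.
  pose proof (Fab n). destruct (Fside n) as [[Hs [Hn Hf]]|[Hs [Hn Hf]]].
  - left. split; auto. split; auto. split.
    + apply fbad_val. left; split; lra. intros m Hm. destruct (le_lt_dec n m) as [|Hlt]; auto. exfalso.
      pose proof (Ffarnear m n Hlt). pose proof (Fab m).
      destruct (Fside m) as [[? [? ?]]|[? [? ?]]]; destruct Hm as [[? ?]|[? ?]]; lra.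
    + apply fbad_upper. intros m Hm. destruct (lt_eq_lt_dec m n) as [[Hlt|Heq]|Hgt]; auto; exfalso.
      * pose proof (Ffarnear m n Hlt). pose proof (Fab m).
        destruct (Fside m) as [[? [? ?]]|[? [? ?]]]; destruct Hm as [[? ?]|[? ?]]; lra.
      * subst m. destruct Hm as [[? ?]|[? ?]]; lra.
  - right. split; auto. split; auto. split.
    + apply fbad_val. right; split; lra. intros m Hm. destruct (le_lt_dec n m) as [|Hlt]; auto. exfalso.
      pose proof (Ffarnear m n Hlt). pose proof (Fab m).
      destruct (Fside m) as [[? [? ?]]|[? [? ?]]]; destruct Hm as [[? ?]|[? ?]]; lra.
    + apply fbad_upper. intros m Hm. destruct (lt_eq_lt_dec m n) as [[Hlt|Heq]|Hgt]; auto; exfalso.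
      * pose proof (Ffarnear m n Hlt). pose proof (Fab m).
        destruct (Fside m) as [[? [? ?]]|[? [? ?]]]; destruct Hm as [[? ?]|[? ?]]; lra.
      * subst m. destruct Hm as [[? ?]|[? ?]]; lra.
Qed.

Lemma div_lt N L c : 0 < L -> 0 <= N -> N < c * L -> Rabs (N / L) < c.
Proof.
  intros HL HN H. rewrite Rabs_pos_eq by (apply Rle_mult_inv_pos; lra).
  apply (Rmult_lt_reg_r L); auto. unfold Rdiv. rewrite Rmult_assoc, Rinv_l; lra.
Qed.

Lemma fbad_C1 : C1_on K fbad.
Proof.
  exists (fun _ => 0). split.
  - intros x Kx eps He. exists 1. split. lra. intros. rewrite Rminus_diag, Rabs_R0; auto.
  - intros x Kx eps He. destruct (Req_dec x xi) as [Ex|Ex].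
    + rewrite Ex. destruct (arch1 eps He) as [n0 Hn0].
      exists (ln n0). split. apply Fl_pos. intros y Ky Hne Hy.
      rewrite fbad_xi. replace (fbad y - 0 - 0 * (y - xi)) with (fbad y) by ring.
      assert (HL : 0 < Rabs (y - xi)) by (apply Rabs_pos_lt; lra).
      apply div_lt; auto. apply fbad_nonneg.
      destruct (classic (exists n, between n y)) as [He'|He'].
      * destruct (Nof_spec y He') as [HN Hmin].
        rewrite (fbad_val y (Nof y)); auto.
        pose proof (between_far _ _ HN). pose proof (Fratio (Nof y)).
        pose proof (Fl_pos (Nof y)).
        destruct (le_lt_dec n0 (Nof y)) as [Hle|Hlt].
        -- assert (HI : INR (n0 + 1) <= INR (Nof y + 1)) by (apply le_INR; lia).
           pose proof (INR_S1 n0) as HI1.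
           assert (Hone : 1 < eps * INR (n0 + 1)).
           { apply (Rmult_lt_compat_r (INR (n0 + 1))) in Hn0; [|lra].
             rewrite Rinv_l in Hn0 by lra. lra. }
           assert (ln (Nof y) * INR (n0 + 1) < Rabs (y - xi)) by nra.
           nra.
        -- pose proof (Fl_mono (Nof y) n0 ltac:(lia)). pose proof (Fl_far (Nof y)). lra.
      * rewrite fbad_none; auto. nra.
    + set (d := Rabs (x - xi)).
      assert (Hd : 0 < d) by (apply Rabs_pos_lt; lra).
      destruct (arch1 (d/2) ltac:(lra)) as [n0 Hn0].
      assert (Hf : forall n, ln n < ln n0 -> far n < d / 2).
      { intros n Hl. destruct (le_lt_dec n n0) as [Hle|Hlt].
        - pose proof (Fl_mono n n0 Hle). lra.
        - pose proof (Ffar n). pose proof (Fepsn n).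
          assert (/ INR (n + 1) <= / INR (n0 + 1)).
          { apply Rinv_le_contravar. pose proof (INR_S1 n0); lra. apply le_INR; lia. }
          lra. }
      exists (Rmin (d/2) (ln n0)). split. apply Rmin_pos. lra. apply Fl_pos.
      intros y Ky Hne Hy. pose proof (Rmin_l (d/2) (ln n0)). pose proof (Rmin_r (d/2) (ln n0)).
      assert (E : fbad y = fbad x).
      { apply fbad_ext. intros n. split.
        - apply (transfer n0 (d/2) y x); auto; try lra. change (d/2 <= d); lra.
        - apply (transfer n0 (d/2) x y); auto; try (rewrite Rabs_minus_sym; lra).
          pose proof (Rabs_triang (x - y) (y - xi)) as Ht. replace (x - y + (y - xi)) with (x - xi) in Ht by ring.
          rewrite (Rabs_minus_sym x y) in Ht. fold d in Ht. lra. }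
      rewrite E. replace ((fbad x - fbad x - 0 * (y - x)) / Rabs (y - x)) with 0
        by (field; apply Rabs_no_R0; lra).
      rewrite Rabs_R0; auto.
Qed.

Lemma fbad_not_restr : ~ C1_restr K fbad.
Proof.
  intros [g [[g' [Hder Hcont]] Heq]].
  assert (E0 : g xi = 0) by (rewrite Heq; auto; apply fbad_xi).
  pose proof (Hcont xi) as Hc. rewrite cont_pt_eps in Hc.
  destruct (Hc (1/8) ltac:(lra)) as [d1 [Hd1 H1]].
  destruct (Hder xi (1/8) ltac:(lra)) as [d0 H0].
  pose proof (cond_pos d0) as Hd0.
  destruct (arch1 (Rmin d0 (Rmin d1 (1/8)))) as [n Hn].
  { repeat apply Rmin_pos; lra. }
  pose proof (Rmin_l d0 (Rmin d1 (1/8))). pose proof (Rmin_r d0 (Rmin d1 (1/8))).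
  pose proof (Rmin_l d1 (1/8)). pose proof (Rmin_r d1 (1/8)).
  pose proof (Ffar n). pose proof (Fepsn n). pose proof (Fratio n). pose proof (Fl_pos n).
  pose proof (INR_S1 n) as HI1.
  assert (HI : 8 < INR (n + 1)).
  { destruct (Rle_lt_dec (INR (n + 1)) 8) as [Hle|]; auto.
    pose proof (Rinv_le_contravar (INR (n + 1)) 8 ltac:(lra) Hle). lra. }
  assert (Hl8 : 8 * ln n < far n) by nra.
  destruct (MVT_cor2 g g' (an n) (bn n) (Fab n) (fun c _ => Hder c)) as [c [Hm Hc']].
  destruct (Fgap n) as [_ [_ [Ka Kb]]].
  rewrite (Heq _ Ka), (Heq _ Kb) in Hm.
  assert (Hgc : Rabs (g' c - g' xi) < 1/8).
  { apply H1. apply Rabs_def1; destruct (Fside n) as [[? [? Hf]]|[? [? Hf]]]; lra. }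
  apply Rabs_def2 in Hgc.
  unfold ln in *.
  destruct (ends n) as [[Hs [Hf [Hb Ha]]]|[Hs [Hf [Ha Hb]]]].
  - assert (Hh : bn n - xi <> 0) by lra.
    pose proof (H0 (bn n - xi) Hh ltac:(rewrite Rabs_pos_eq; lra)) as Hq.
    replace (xi + (bn n - xi)) with (bn n) in Hq by ring.
    rewrite (Heq _ Kb), E0, Hb in Hq. apply Rabs_def2 in Hq. unfold ln in *.
    set (q := (bn n - an n - 0) / (bn n - xi)) in *.
    assert (Hqe : q * (bn n - xi) = bn n - an n) by (unfold q; field; lra).
    assert (0 < q) by nra. assert (q < 1/8) by nra.
    pose proof (fbad_nonneg (an n)).
    assert (1/2 <= g' c) by nra. lra.
  - assert (Hh : an n - xi <> 0) by lra.
    pose proof (H0 (an n - xi) Hh ltac:(rewrite Rabs_left; lra)) as Hq.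
    replace (xi + (an n - xi)) with (an n) in Hq by ring.
    rewrite (Heq _ Ka), E0, Ha in Hq. apply Rabs_def2 in Hq. unfold ln in *.
    set (q := (bn n - an n - 0) / (an n - xi)) in *.
    assert (Hqe : q * (an n - xi) = bn n - an n) by (unfold q; field; lra).
    assert (q < 0) by nra. assert (-1/8 < q) by nra.
    pose proof (fbad_nonneg (bn n)).
    assert (g' c <= -1/2) by nra. lra.
Qed.
End Bad.

Theorem mainTheorem17 (K : R -> Prop) (hK : compact K) :
  (forall f : R -> R, C1_on K f <-> C1_restr K f) <->
  (forall xi, K xi -> sigma_finite K xi).
Proof.
  split.
  - intros H xi Kxi. apply NNPP. intro Hns.
    assert (Hbad : forall eps M, 0 < eps -> exists p : R * R, good K xi eps M p).
    { intros eps M He. apply NNPP. intro Hno. apply Hns. exists eps, M. split; auto.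
      intros a b Hg Ha Hb. apply Rnot_lt_le. intro Hr. apply Hno. exists (a, b).
      unfold good; simpl. auto. }
    apply (fbad_not_restr K xi Kxi Hbad). apply H. apply fbad_C1; auto.
  - intros Hsig f. split.
    + apply extend_ok; auto. intros s Hs. apply compact_closed_loc; auto.
    + apply restr_to_on.
Qed.
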